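(* Let $T$ be an $L$-theory extending $I\Sigma_1$ such that for some $K\in\mathbb{N}$ and some $\varepsilon>0$, $T$ proves: for all pairwise coprime $a,b,c$ with $a+b=c$, $c < K\,\mathrm{rad}(abc)^{1+\varepsilon}$; and $T$ proves Fermat's Last Theorem for the definable exponential $x^y$ (no $a,b,c\neq 0$ and $n>2$ with $a^n+b^n=c^n$). Then $T + \mathrm{Exp}' + (\mathrm{e5}') + (\mathrm{e8})$ proves Fermat's Last Theorem for $e$: there are no non-zero $x,y,z\in B$ and $n\in A$ with $n>2$ such that $e(x,n)+e(y,n)=e(z,n)$.
   Context: $L = \langle 0,1,+,\cdot,\le\rangle$, $L^e = \langle 0,1,+,\cdot,e,\le\rangle$ with $e$ a binary (possibly partial) function symbol. $x^y$ is the exponential $\Delta_1$-definable in $I\Sigma_1$; $\mathrm{rad}(a)$ is the product of the distinct primes dividing $a$. Presburger arithmetic $\mathrm{Pr}$: $0 \ne z+1$; $x\neq 0 \to \exists z\,(x = z+1)$; $x+z=y+z\to x=y$; $x+0=x$; associativity and commutativity of $+$; $x\le y \leftrightarrow \exists z\,(x+z=y)$; for each standard $0<n$, $\exists y\,(ny \le x < n(y+1))$. $\mathrm{Exp}'$ consists of: (e0) there is an $L$-substructure $\mathcal{A}$ of $\mathcal{B}$ (universe $A$) satisfying $\mathrm{Pr}$ with $e: B\times A\to B$; and for all $x\in B$, $y,z\in A$: (e1) $(x=1\vee y=0)\leftrightarrow e(x,y)=1$; (e2) $x\neq0\to e(x,y)\ne0$; (e3) $e(x,1)=x$; (e4) $e(x,y+z)=e(x,y)e(x,z)$.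 Further axioms: (e5') $e(xy,z)=e(x,z)\cdot e(y,z)$ for $x,y\in B$, $z\in A$; (e8) for all $x,y\in B$ and $a,b\in A$: if $x$ and $y$ are coprime, then $e(x,a)$ and $e(y,b)$ are coprime. *)

(* Defs.v *)
(* first-order syntax for L = <0,1,+,.,<=>, semantics, IΣ1,
   and the semantic content of the axioms of Exp', (e5'), (e8).
   "T proves phi" is rendered semantically (every model of T satisfies phi),
   which is equivalent by Goedel's completeness theorem. *)
From Stdlib Require Import Arith.

Inductive term : Type :=
| Tvar : nat -> term
| Tzero : term
| Tone : term
| Tadd : term -> term -> term
| Tmul : term -> term -> term.

Inductive form : Type :=
| Feq : term -> term -> form
| Fle : term -> term -> form
| Ffalse : form
| Fnot : form -> form
| Fand : form -> form -> form
| For : form -> form -> form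
| Fimp : form -> form -> form
| Fall : nat -> form -> form
| Fex : nat -> form -> form.

Fixpoint occurs (v : nat) (t : term) : bool :=
  match t with
  | Tvar w => Nat.eqb v w
  | Tzero | Tone => false
  | Tadd s u | Tmul s u => occurs v s || occurs v u
  end.

Inductive Delta0 : form -> Prop :=
| D0_eq s t : Delta0 (Feq s t)
| D0_le s t : Delta0 (Fle s t)
| D0_false : Delta0 Ffalse
| D0_not f : Delta0 f -> Delta0 (Fnot f)
| D0_and f g : Delta0 f -> Delta0 g -> Delta0 (Fand f g)
| D0_or f g : Delta0 f -> Delta0 g -> Delta0 (For f g)
| D0_imp f g : Delta0 f -> Delta0 g -> Delta0 (Fimp f g)
| D0_ball v t f : occurs v t = false -> Delta0 f ->
    Delta0 (Fall v (Fimp (Fle (Tvar v) t) f))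
| D0_bex v t f : occurs v t = false -> Delta0 f ->
    Delta0 (Fex v (Fand (Fle (Tvar v) t) f)).

Inductive Sigma1 : form -> Prop :=
| S1_d0 f : Delta0 f -> Sigma1 f
| S1_ex v f : Sigma1 f -> Sigma1 (Fex v f).

(* An L-theory: a set of L-formulas (read as their universal closures). *)
Definition theory := form -> Prop.

Record LStr : Type := {
  car :> Type;
  s0 : car;
  s1 : car;
  sadd : car -> car -> car;
  smul : car -> car -> car;
  sle : car -> car -> Prop }.

Arguments s0 {_}. Arguments s1 {_}. Arguments sadd {_} _ _.
Arguments smul {_} _ _. Arguments sle {_} _ _.

Definition upd {M : LStr} (rho : nat -> M) (v : nat) (a : M) : nat -> M :=
  fun w => if Nat.eqb w v then a else rho w.

Fixpoint evalt {M : LStr} (rho : nat -> M) (t : term) : M :=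
  match t with
  | Tvar v => rho v
  | Tzero => s0
  | Tone => s1
  | Tadd s u => sadd (evalt rho s) (evalt rho u)
  | Tmul s u => smul (evalt rho s) (evalt rho u)
  end.

Fixpoint sat {M : LStr} (rho : nat -> M) (f : form) : Prop :=
  match f with
  | Feq s t => evalt rho s = evalt rho t
  | Fle s t => sle (evalt rho s) (evalt rho t)
  | Ffalse => False
  | Fnot g => ~ sat rho g
  | Fand g h => sat rho g /\ sat rho h
  | For g h => sat rho g \/ sat rho h
  | Fimp g h => sat rho g -> sat rho h
  | Fall v g => forall a : M, sat (upd rho v a) g
  | Fex v g => exists a : M, sat (upd rho v a) g
  end.

Definition ModelOf (T : theory) (M : LStr) : Prop :=
  forall f, T f -> forall rho : nat -> M, sat rho f.

Definition BasicAx (M : LStr) : Prop :=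
  (forall x : M, sadd x s1 <> s0) /\
  (forall x y : M, sadd x s1 = sadd y s1 -> x = y) /\
  (forall x : M, x <> s0 -> exists y, x = sadd y s1) /\
  (forall x : M, sadd x s0 = x) /\
  (forall x y : M, sadd x (sadd y s1) = sadd (sadd x y) s1) /\
  (forall x : M, smul x s0 = s0) /\
  (forall x y : M, smul x (sadd y s1) = sadd (smul x y) x) /\
  (forall x y : M, sle x y <-> exists z, sadd z x = y).

Definition Sigma1Ind (M : LStr) : Prop :=
  forall (f : form) (v : nat) (rho : nat -> M), Sigma1 f ->
    sat (upd rho v s0) f ->
    (forall a : M, sat (upd rho v a) f -> sat (upd rho v (sadd a s1)) f) ->
    forall a : M, sat (upd rho v a) f.

Definition ModelISigma1 (M : LStr) : Prop := BasicAx M /\ Sigma1Ind M.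

Fixpoint num {M : LStr} (n : nat) : M :=
  match n with O => s0 | S k => sadd (num k) s1 end.

Definition slt {M : LStr} (x y : M) : Prop := sle x y /\ x <> y.
Definition sdvd {M : LStr} (d a : M) : Prop := exists k, a = smul d k.
Definition sprime {M : LStr} (p : M) : Prop :=
  slt s1 p /\ forall d, sdvd d p -> d = s1 \/ d = p.
Definition scoprime {M : LStr} (x y : M) : Prop :=
  forall d, sdvd d x -> sdvd d y -> d = s1.
Definition ssquarefree {M : LStr} (r : M) : Prop :=
  forall d, sdvd (smul d d) r -> d = s1.
(* r = rad(a): r is the squarefree divisor of a divisible by every prime
   divisor of a (i.e. the product of the distinct primes dividing a) *)
Definition IsRad {M : LStr} (a r : M) : Prop :=
  sdvd r a /\ ssquarefree r /\ forall p, sprime p -> sdvd p a -> sdvd p r.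

(* x^y, the exponential Delta_1-definable in I Sigma_1: in a model of
   I Sigma_1 it is the unique function satisfying the recursion equations
   whose graph is (parameter-free) Sigma_1-definable. *)
Definition Sigma1Graph {M : LStr} (f : M -> M -> M) : Prop :=
  exists phi, Sigma1 phi /\
    forall rho : nat -> M, sat rho phi <-> f (rho 0) (rho 1) = rho 2.

Definition IsDefExp {M : LStr} (ex : M -> M -> M) : Prop :=
  (forall x, ex x s0 = s1) /\
  (forall x y, ex x (sadd y s1) = smul (ex x y) x) /\
  Sigma1Graph ex.

(* ABC with constant K and epsilon = p/q:
   c < K rad(abc)^(1+p/q)  written as  c^q < K^q * rad(abc)^(q+p). *)
Definition ABC_in {M : LStr} (ex : M -> M -> M) (K p q : nat) : Prop :=
  forall a b c : M, a <> s0 -> b <> s0 ->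
    scoprime a b -> scoprime a c -> scoprime b c ->
    sadd a b = c ->
    forall r, IsRad (smul (smul a b) c) r ->
      slt (ex c (num q)) (smul (ex (num K) (num q)) (ex r (num (q + p)))).

Definition FLT_exp {M : LStr} (ex : M -> M -> M) : Prop :=
  ~ exists a b c n : M, a <> s0 /\ b <> s0 /\ c <> s0 /\ slt (num 2) n /\
      sadd (ex a n) (ex b n) = ex c n.

Fixpoint nmul {M : LStr} (n : nat) (y : M) : M :=
  match n with O => s0 | S k => sadd (nmul k y) y end.

Definition SubPr {M : LStr} (A : M -> Prop) : Prop :=
  A s0 /\ A s1 /\ (forall x y, A x -> A y -> A (sadd x y)) /\
  (forall x y, A x -> A y -> A (smul x y)) /\
  (forall z, A z -> s0 <> sadd z s1) /\
  (forall x, A x -> x <> s0 -> exists z, A z /\ x = sadd z s1) /\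
  (forall x y z, A x -> A y -> A z -> sadd x z = sadd y z -> x = y) /\
  (forall x, A x -> sadd x s0 = x) /\
  (forall x y z, A x -> A y -> A z -> sadd x (sadd y z) = sadd (sadd x y) z) /\
  (forall x y, A x -> A y -> sadd x y = sadd y x) /\
  (forall x y, A x -> A y -> (sle x y <-> exists z, A z /\ sadd x z = y)) /\
  (forall n : nat, 0 < n -> forall x, A x ->
     exists y, A y /\ sle (nmul n y) x /\ slt x (nmul n (sadd y s1))).

(* e : B x A -> B is modelled as e : B -> B -> B of which only the values
   with second argument in A matter. *)
Definition ExpPrime {M : LStr} (A : M -> Prop) (e : M -> M -> M) : Prop :=
  SubPr A /\
  (forall x y, A y -> ((x = s1 \/ y = s0) <-> e x y = s1)) /\
  (forall x y, A y -> x <> s0 -> e x y <> s0) /\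
  (forall x, e x s1 = x) /\
  (forall x y z, A y -> A z -> e x (sadd y z) = smul (e x y) (e x z)).

Definition E5' {M : LStr} (A : M -> Prop) (e : M -> M -> M) : Prop :=
  forall x y z, A z -> e (smul x y) z = smul (e x z) (e y z).

Definition E8 {M : LStr} (A : M -> Prop) (e : M -> M -> M) : Prop :=
  forall x y a b, A a -> A b -> scoprime x y -> scoprime (e x a) (e y b).

Definition FLT_e {M : LStr} (A : M -> Prop) (e : M -> M -> M) : Prop :=
  ~ exists x y z n : M, x <> s0 /\ y <> s0 /\ z <> s0 /\ A n /\
      slt (num 2) n /\ sadd (e x n) (e y n) = e z n.

(* Main.v *)
Require Import Defs.
From Stdlib Require Import Arith Lia Classical ClassicalEpsilon Setoid Ring.

Section Model.
Variable M : LStr.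
Hypothesis HB : BasicAx M.
Hypothesis HI : Sigma1Ind M.

Local Infix "⊕" := (@sadd M) (at level 50, left associativity).
Local Infix "⊗" := (@smul M) (at level 40, left associativity).
Local Notation "'Z'" := (@s0 M).
Local Notation "'I'" := (@s1 M).
Local Infix "≼" := (@sle M) (at level 70).
Local Infix "≺" := (@slt M) (at level 70).

Lemma ax_succ0 (x : M) : x ⊕ I <> Z. Proof. apply HB. Qed.
Lemma ax_sinj (x y : M) : x ⊕ I = y ⊕ I -> x = y. Proof. apply HB. Qed.
Lemma ax_pred (x : M) : x <> Z -> exists y, x = y ⊕ I. Proof. apply HB. Qed.
Lemma ax_add0 (x : M) : x ⊕ Z = x. Proof. apply HB. Qed.
Lemma ax_addS (x y : M) : x ⊕ (y ⊕ I) = (x ⊕ y) ⊕ I. Proof. apply HB. Qed.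
Lemma ax_mul0 (x : M) : x ⊗ Z = Z. Proof. apply HB. Qed.
Lemma ax_mulS (x y : M) : x ⊗ (y ⊕ I) = x ⊗ y ⊕ x. Proof. apply HB. Qed.
Lemma ax_le (x y : M) : x ≼ y <-> exists z, z ⊕ x = y. Proof. apply HB. Qed.

Lemma ind1 f v rho (P : M -> Prop) : Sigma1 f ->
  (forall a, sat (upd rho v a) f <-> P a) -> P Z -> (forall a, P a -> P (a ⊕ I)) ->
  forall a, P a.
Proof.
  intros Hs He H0 HS a. apply He. apply HI; auto. apply He; auto.
  intros b Hb; apply He, HS, He, Hb.
Qed.

Ltac d0 := repeat (constructor || reflexivity).
Ltac s1 := repeat apply S1_ex; apply S1_d0; d0.
Ltac sind f rho :=
  let a := fresh "a" in
  match goal with |- forall z, @?P z => apply (ind1 f 0 rho P); [s1 | intro a; cbn; reflexivity | | ] end.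

Lemma add0l (x : M) : Z ⊕ x = x.
Proof.
  revert x. sind (Feq (Tadd Tzero (Tvar 0)) (Tvar 0)) (fun _ : nat => (Z:M)).
  - apply ax_add0.
  - intros a H. rewrite ax_addS, H. reflexivity.
Qed.

Lemma addSl (x y : M) : (x ⊕ I) ⊕ y = (x ⊕ y) ⊕ I.
Proof.
  revert y. sind (Feq (Tadd (Tadd (Tvar 1) Tone) (Tvar 0)) (Tadd (Tadd (Tvar 1) (Tvar 0)) Tone))
    (fun _ : nat => x).
  - rewrite !ax_add0; reflexivity.
  - intros a H. rewrite !ax_addS, H. reflexivity.
Qed.

Lemma addC (x y : M) : x ⊕ y = y ⊕ x.
Proof.
  revert y. sind (Feq (Tadd (Tvar 1) (Tvar 0)) (Tadd (Tvar 0) (Tvar 1))) (fun _ : nat => x).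
  - rewrite ax_add0, add0l; reflexivity.
  - intros a H. rewrite ax_addS, H, addSl. reflexivity.
Qed.

Lemma addA (x y z : M) : (x ⊕ y) ⊕ z = x ⊕ (y ⊕ z).
Proof.
  revert z. sind (Feq (Tadd (Tadd (Tvar 1) (Tvar 2)) (Tvar 0)) (Tadd (Tvar 1) (Tadd (Tvar 2) (Tvar 0))))
    (fun i : nat => match i with 1 => x | _ => y end).
  - rewrite !ax_add0; reflexivity.
  - intros a H. rewrite !ax_addS, H. reflexivity.
Qed.

Lemma mulDr (x y z : M) : x ⊗ (y ⊕ z) = x ⊗ y ⊕ x ⊗ z.
Proof.
  revert z. sind (Feq (Tmul (Tvar 1) (Tadd (Tvar 2) (Tvar 0))) (Tadd (Tmul (Tvar 1) (Tvar 2)) (Tmul (Tvar 1) (Tvar 0))))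
    (fun i : nat => match i with 1 => x | _ => y end).
  - rewrite ax_add0, ax_mul0, ax_add0; reflexivity.
  - intros a H. rewrite ax_addS, !ax_mulS, H, addA. reflexivity.
Qed.

Lemma mul0l (x : M) : Z ⊗ x = Z.
Proof.
  revert x. sind (Feq (Tmul Tzero (Tvar 0)) Tzero) (fun _ : nat => (Z:M)).
  - apply ax_mul0.
  - intros a H. rewrite ax_mulS, H, ax_add0. reflexivity.
Qed.

Lemma mulSl (x y : M) : (x ⊕ I) ⊗ y = x ⊗ y ⊕ y.
Proof.
  revert y. sind (Feq (Tmul (Tadd (Tvar 1) Tone) (Tvar 0)) (Tadd (Tmul (Tvar 1) (Tvar 0)) (Tvar 0)))
    (fun _ : nat => x).
  - rewrite !ax_mul0, ax_add0; reflexivity.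
  - intros a H. rewrite !ax_mulS, H, !addA. f_equal.
    rewrite !ax_addS, (addC a x). reflexivity.
Qed.

Lemma mulC (x y : M) : x ⊗ y = y ⊗ x.
Proof.
  revert y. sind (Feq (Tmul (Tvar 1) (Tvar 0)) (Tmul (Tvar 0) (Tvar 1))) (fun _ : nat => x).
  - rewrite ax_mul0, mul0l; reflexivity.
  - intros a H. rewrite ax_mulS, H, mulSl. reflexivity.
Qed.

Lemma mulA (x y z : M) : (x ⊗ y) ⊗ z = x ⊗ (y ⊗ z).
Proof.
  revert z. sind (Feq (Tmul (Tmul (Tvar 1) (Tvar 2)) (Tvar 0)) (Tmul (Tvar 1) (Tmul (Tvar 2) (Tvar 0))))
    (fun i : nat => match i with 1 => x | _ => y end).
  - rewrite !ax_mul0; reflexivity.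
  - intros a H. rewrite !ax_mulS, H, mulDr. reflexivity.
Qed.

Lemma mul1l (x : M) : I ⊗ x = x.
Proof.
  rewrite mulC. rewrite <- (add0l I), ax_mulS, ax_mul0, add0l. reflexivity.
Qed.

Lemma MSR : semi_ring_theory (R:=M) Z I sadd smul eq.
Proof.
  constructor.
  apply add0l. apply addC. intros; symmetry; apply addA. apply mul1l. apply mul0l.
  apply mulC. intros; symmetry; apply mulA. intros n m p. rewrite mulC, mulDr, !(mulC p). reflexivity.
Qed.

Add Ring MR : MSR.


Lemma addcan (x y z : M) : x ⊕ z = y ⊕ z -> x = y.
Proof.
  revert z. sind (Fimp (Feq (Tadd (Tvar 1) (Tvar 0)) (Tadd (Tvar 2) (Tvar 0))) (Feq (Tvar 1) (Tvar 2)))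
    (fun i : nat => match i with 1 => x | _ => y end).
  - rewrite !ax_add0; auto.
  - intros a H E. rewrite !ax_addS in E. apply ax_sinj in E. auto.
Qed.

Lemma addcanl (x y z : M) : z ⊕ x = z ⊕ y -> x = y.
Proof. rewrite !(addC z). apply addcan. Qed.

Lemma add_eq0 (x y : M) : x ⊕ y = Z -> x = Z /\ y = Z.
Proof.
  intros E. destruct (classic (y = Z)) as [Hy|Hy].
  - subst. rewrite ax_add0 in E. auto.
  - destruct (ax_pred y Hy) as [y' ->]. rewrite ax_addS in E. exfalso; eapply ax_succ0; eauto.
Qed.

Lemma addK0 (x y : M) : x ⊕ y = x -> y = Z.
Proof. intros E. apply (addcanl _ _ x). rewrite ax_add0. auto. Qed.

Lemma le_refl (x : M) : x ≼ x.
Proof. apply ax_le. exists Z. apply add0l. Qed.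

Lemma le_trans (x y z : M) : x ≼ y -> y ≼ z -> x ≼ z.
Proof.
  rewrite !ax_le. intros [a Ha] [b Hb]. exists (b ⊕ a). subst. ring.
Qed.

Lemma le_antisym (x y : M) : x ≼ y -> y ≼ x -> x = y.
Proof.
  rewrite !ax_le. intros [a Ha] [b Hb]. subst.
  assert (E : (b ⊕ a) ⊕ x = Z ⊕ x) by (transitivity (b ⊕ (a ⊕ x)); [ring| rewrite Hb; ring]).
  apply addcan in E. apply add_eq0 in E as [-> ->]. ring.
Qed.

Lemma le_0 (x : M) : Z ≼ x.
Proof. apply ax_le. exists x. apply ax_add0. Qed.

Lemma le_addl (x y : M) : x ≼ y ⊕ x.
Proof. apply ax_le. eauto. Qed.

Lemma le_addr (x y : M) : x ≼ x ⊕ y.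
Proof. rewrite addC. apply le_addl. Qed.

Lemma le0_eq (x : M) : x ≼ Z -> x = Z.
Proof. rewrite ax_le. intros [a Ha]. apply add_eq0 in Ha. tauto. Qed.

Lemma le_total (x y : M) : x ≼ y \/ y ≼ x.
Proof.
  revert y. sind (For (Fle (Tvar 1) (Tvar 0)) (Fle (Tvar 0) (Tvar 1))) (fun _ : nat => x).
  - right. apply le_0.
  - intros a [H|H].
    + left. eapply le_trans; [exact H|]. apply le_addr.
    + apply ax_le in H as [b Hb]. destruct (classic (b = Z)) as [->|Hz].
      * left. rewrite add0l in Hb. subst. apply le_addr.
      * destruct (ax_pred _ Hz) as [c ->]. right. apply ax_le. exists c. rewrite <- Hb. ring.
Qed.

Lemma leS (x y : M) : x ≼ y ⊕ I -> x ≼ y \/ x = y ⊕ I.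
Proof.
  rewrite ax_le. intros [z Hz]. destruct (classic (z = Z)) as [->|Hz0].
  - right. rewrite <- Hz. ring.
  - destruct (ax_pred _ Hz0) as [c ->]. left. apply ax_le. exists c.
    apply ax_sinj. rewrite <- Hz. ring.
Qed.

Lemma lt_le (x y : M) : x ≺ y <-> x ⊕ I ≼ y.
Proof.
  unfold slt. rewrite !ax_le. split.
  - intros [[z Hz] Hne]. destruct (classic (z = Z)) as [->|Hz0].
    + rewrite add0l in Hz. contradiction.
    + destruct (ax_pred _ Hz0) as [c ->]. exists c. rewrite <- Hz. ring.
  - intros [z Hz]. split.
    + exists (z ⊕ I). rewrite <- Hz. ring.
    + intros E0. rewrite <- E0 in Hz. assert (E : (z ⊕ I) ⊕ x = Z ⊕ x) by (transitivity (z ⊕ (x ⊕ I)); [ring|rewrite Hz; ring]).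
      apply addcan in E. eapply ax_succ0; eauto.
Qed.

Lemma lt_S_le (x y : M) : x ≺ y -> x ⊕ I ≼ y. Proof. apply lt_le. Qed.
Lemma le_S_lt (x y : M) : x ⊕ I ≼ y -> x ≺ y. Proof. apply lt_le. Qed.

Lemma not_le (x y : M) : ~ x ≼ y -> y ≺ x.
Proof.
  intros H. split. destruct (le_total x y); tauto. intros E; subst; apply H, le_refl.
Qed.

Lemma lt_irrefl (x : M) : ~ x ≺ x.
Proof. intros [_ H]. auto. Qed.

Lemma lt_not_le (x y : M) : x ≺ y -> ~ y ≼ x.
Proof. intros [H1 H2] H3. apply H2, le_antisym; auto. Qed.

Lemma le_lt_trans (x y z : M) : x ≼ y -> y ≺ z -> x ≺ z.
Proof. rewrite !lt_le. intros H1 H2. eapply le_trans; [|exact H2]. rewrite !(addC _ I).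
  apply ax_le in H1 as [a Ha]. apply ax_le. exists a. rewrite <- Ha; ring. Qed.

Lemma lt_le_trans (x y z : M) : x ≺ y -> y ≼ z -> x ≺ z.
Proof. rewrite !lt_le. intros H1 H2. eapply le_trans; eauto. Qed.

Lemma lt_weak (x y : M) : x ≺ y -> x ≼ y.
Proof. intros [H _]; auto. Qed.

Lemma le_add_mono (x y z : M) : x ≼ y -> x ⊕ z ≼ y ⊕ z.
Proof. rewrite !ax_le. intros [a Ha]. exists a. subst; ring. Qed.

Lemma le_add_can (x y z : M) : x ⊕ z ≼ y ⊕ z -> x ≼ y.
Proof. rewrite !ax_le. intros [a Ha]. exists a. apply (addcan _ _ z). rewrite <- Ha; ring. Qed.

Lemma le_add2 (x y u v : M) : x ≼ y -> u ≼ v -> x ⊕ u ≼ y ⊕ v.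
Proof. rewrite !ax_le. intros [a Ha] [b Hb]. exists (a ⊕ b). subst; ring. Qed.

Lemma le_mul_mono (x y z : M) : x ≼ y -> x ⊗ z ≼ y ⊗ z.
Proof. rewrite !ax_le. intros [a Ha]. exists (a ⊗ z). subst; ring. Qed.

Lemma le_mul2 (x y u v : M) : x ≼ y -> u ≼ v -> x ⊗ u ≼ y ⊗ v.
Proof. intros H1 H2. eapply le_trans. apply le_mul_mono, H1. rewrite !(mulC y). apply le_mul_mono, H2. Qed.

Lemma mul_eq0 (x y : M) : x ⊗ y = Z -> x = Z \/ y = Z.
Proof.
  intros E. destruct (classic (y = Z)) as [|Hy]; auto. destruct (ax_pred _ Hy) as [c ->].
  rewrite ax_mulS in E. apply add_eq0 in E. tauto.
Qed.

Lemma le_mul_can (x y z : M) : z <> Z -> x ⊗ z ≼ y ⊗ z -> x ≼ y.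
Proof.
  intros Hz H. destruct (le_total x y) as [|H']; auto.
  apply ax_le in H' as [a Ha]. subst x. apply ax_le in H as [b Hb].
  assert (E : (b ⊕ a ⊗ z) ⊕ y ⊗ z = Z ⊕ y ⊗ z) by (rewrite <- Hb at 2; ring).
  apply addcan, add_eq0 in E as [_ E]. apply mul_eq0 in E as [->|]; [|contradiction].
  rewrite add0l. apply le_refl.
Qed.

Lemma mulcan (x y z : M) : z <> Z -> x ⊗ z = y ⊗ z -> x = y.
Proof.
  intros Hz E. apply le_antisym; apply (le_mul_can _ _ z Hz); rewrite E; apply le_refl.
Qed.

Lemma one_ne0 : (I : M) <> Z.
Proof. rewrite <- (add0l I). apply ax_succ0. Qed.

Lemma ne0_ge1 (x : M) : x <> Z -> I ≼ x.
Proof. intros H. destruct (ax_pred _ H) as [c ->]. apply le_addl. Qed.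

Lemma le_mul_r (x y : M) : y <> Z -> x ≼ x ⊗ y.
Proof. intros H. rewrite (mulC x y). replace x with (I ⊗ x) at 1 by ring. apply le_mul_mono, ne0_ge1, H. Qed.

Fixpoint tmax (t : term) : nat :=
  match t with Tvar v => S v | Tzero | Tone => 0
  | Tadd s u | Tmul s u => Nat.max (tmax s) (tmax u) end.
Fixpoint fmax (f : form) : nat :=
  match f with
  | Feq s t | Fle s t => Nat.max (tmax s) (tmax t)
  | Ffalse => 0
  | Fnot g => fmax g
  | Fand g h | For g h | Fimp g h => Nat.max (fmax g) (fmax h)
  | Fall v g | Fex v g => Nat.max (S v) (fmax g) end.

Lemma evalt_ext (rho rho' : nat -> M) t : (forall w, w < tmax t -> rho w = rho' w) -> evalt rho t = evalt rho' t.
Proof.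
  induction t; cbn; intros H; try reflexivity.
  all: try (apply H; lia).
  all: rewrite IHt1, IHt2; [reflexivity| |]; intros; apply H; lia.
Qed.

Lemma sat_ext f : forall (rho rho' : nat -> M), (forall w, w < fmax f -> rho w = rho' w) -> (sat rho f <-> sat rho' f).
Proof.
  induction f; cbn [sat]; intros rho rho' H; cbn [fmax] in H.
  - rewrite (evalt_ext rho rho' t), (evalt_ext rho rho' t0); try tauto; intros; apply H; lia.
  - rewrite (evalt_ext rho rho' t), (evalt_ext rho rho' t0); try tauto; intros; apply H; lia.
  - tauto.
  - rewrite (IHf rho rho'); tauto.
  - rewrite (IHf1 rho rho'), (IHf2 rho rho'); try tauto; intros; apply H; lia.
  - rewrite (IHf1 rho rho'), (IHf2 rho rho'); try tauto; intros; apply H; lia.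
  - rewrite (IHf1 rho rho'), (IHf2 rho rho'); try tauto; intros; apply H; lia.
  - assert (Hu : forall a w, w < fmax f -> upd rho n a w = upd rho' n a w).
    { intros a w Hw; unfold upd; destruct (Nat.eqb w n); auto; apply H; lia. }
    split; intros H' a; specialize (H' a); rewrite (IHf _ _ (Hu a)) in *; auto.
  - assert (Hu : forall a w, w < fmax f -> upd rho n a w = upd rho' n a w).
    { intros a w Hw; unfold upd; destruct (Nat.eqb w n); auto; apply H; lia. }
    split; intros [a H']; exists a; rewrite (IHf _ _ (Hu a)) in *; auto.
Qed.

Lemma upd_same (rho : nat -> M) v a : upd rho v a v = a.
Proof. unfold upd. rewrite Nat.eqb_refl. auto. Qed.
Lemma upd_diff (rho : nat -> M) v w a : w <> v -> upd rho v a w = rho w.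
Proof. intros H. unfold upd. apply Nat.eqb_neq in H. rewrite H. auto. Qed.

Lemma LNP f u (rho : nat -> M) : Delta0 f -> (exists a, sat (upd rho u a) f) ->
  exists a, sat (upd rho u a) f /\ forall b, sat (upd rho u b) f -> a ≼ b.
Proof.
  intros Hd Hex. apply NNPP. intros Hno.
  set (v := S (Nat.max (fmax f) u)).
  set (g := Fall u (Fimp (Fle (Tvar u) (Tvar v)) (Fnot f))).
  assert (Hsw : forall a b, sat (upd (upd rho v b) u a) f <-> sat (upd rho u a) f).
  { intros a b. apply sat_ext. intros w Hw. unfold upd.
    destruct (Nat.eqb w u); auto. replace (Nat.eqb w v) with false; auto.
    symmetry; apply Nat.eqb_neq. unfold v; lia. }
  assert (Hall : forall b, forall a, a ≼ b -> ~ sat (upd rho u a) f).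
  { apply (ind1 g v rho (fun b => forall a, a ≼ b -> ~ sat (upd rho u a) f)).
    - apply S1_d0. unfold g. constructor. cbn. apply Nat.eqb_neq. unfold v; lia. constructor; auto.
    - intros b. unfold g. cbn.
      assert (Huv : v <> u) by (unfold v; lia).
      split; intros H a; specialize (H a); rewrite upd_same, (upd_diff _ u v _ Huv), upd_same in *;
        rewrite ?Hsw in *; auto.
    - intros a Ha Hf. apply le0_eq in Ha. subst. apply Hno. exists Z. split; auto. intros; apply le_0.
    - intros b IH a Ha Hf. apply leS in Ha as [Ha|Ha]; [eapply IH; eauto|]. subst.
      apply Hno. exists (b ⊕ I). split; auto. intros c Hc. destruct (classic (c ≼ b)) as [Hcb|Hcb].
      + exfalso; eapply IH; eauto.
      + apply not_le in Hcb. apply lt_le in Hcb. exact Hcb. }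
  destruct Hex as [a Ha]. eapply Hall; eauto. apply le_refl.
Qed.


Lemma le1 (x : M) : x ≼ I -> x = Z \/ x = I.
Proof. intros H. rewrite <- (add0l I) in H. apply leS in H as [H|H]. left; apply le0_eq, H. right; rewrite H; ring. Qed.

Lemma one_lt_ne (x : M) : x <> Z -> x <> I -> I ≺ x.
Proof.
  intros H0 H1. apply not_le. intros H. apply le1 in H as [|]; auto.
Qed.

Lemma divmod (x d : M) : d <> Z -> exists q r, x = q ⊗ d ⊕ r /\ r ≺ d.
Proof.
  intros Hd. setoid_rewrite lt_le. revert x.
  sind (Fex 3 (Fex 4 (Fand (Feq (Tvar 0) (Tadd (Tmul (Tvar 3) (Tvar 1)) (Tvar 4))) (Fle (Tadd (Tvar 4) Tone) (Tvar 1)))))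
    (fun _ : nat => d).
  - exists Z, Z. split. ring. rewrite add0l. apply ne0_ge1, Hd.
  - intros a [q [r [E H]]]. apply ax_le in H as [z Hz]. destruct (classic (z = Z)) as [->|Hz0].
    + exists (q ⊕ I), Z. split. rewrite E, <- Hz. ring. rewrite add0l. apply ne0_ge1, Hd.
    + destruct (ax_pred _ Hz0) as [w ->]. exists q, (r ⊕ I). split. rewrite E. ring.
      apply ax_le. exists w. rewrite <- Hz. ring.
Qed.

Lemma divmod_uniq (q r q' r' d : M) : q ⊗ d ⊕ r = q' ⊗ d ⊕ r' -> r ≺ d -> r' ≺ d -> q = q' /\ r = r'.
Proof.
  revert q r q' r'.
  assert (W : forall q r q' r', q ≼ q' -> q ⊗ d ⊕ r = q' ⊗ d ⊕ r' -> r ≺ d -> r' ≺ d -> q = q' /\ r = r').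
  { intros q r q' r' Hq E Hr Hr'. apply ax_le in Hq as [k Hk]. subst q'.
    assert (E2 : r = k ⊗ d ⊕ r') by (apply (addcanl _ _ (q ⊗ d)); rewrite E; ring).
    destruct (classic (k = Z)) as [->|Hk].
    - rewrite mul0l, add0l in E2. split. ring. auto.
    - exfalso. apply (lt_not_le _ _ Hr). rewrite E2. eapply le_trans; [|apply le_addr].
      rewrite mulC. apply le_mul_r, Hk. }
  intros q r q' r' E Hr Hr'. destruct (le_total q q') as [H|H].
  - apply W; auto.
  - destruct (W q' r' q r H) as [-> ->]; auto.
Qed.

Definition dvd (d a : M) := exists k, a = d ⊗ k.
Local Infix "∣" := dvd (at level 70).

Lemma dvd_sdvd d a : sdvd d a <-> d ∣ a. Proof. reflexivity. Qed.
Lemma dvd_refl a : a ∣ a. Proof. exists I. ring. Qed.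
Lemma dvd_0 a : a ∣ Z. Proof. exists Z. ring. Qed.
Lemma one_dvd a : I ∣ a. Proof. exists a. ring. Qed.
Lemma dvd_trans a b c : a ∣ b -> b ∣ c -> a ∣ c.
Proof. intros [k ->] [l ->]. exists (k ⊗ l). ring. Qed.
Lemma dvd_mulr a b c : a ∣ b -> a ∣ b ⊗ c.
Proof. intros [k ->]. exists (k ⊗ c). ring. Qed.
Lemma dvd_mull a b c : a ∣ b -> a ∣ c ⊗ b.
Proof. rewrite mulC. apply dvd_mulr. Qed.
Lemma dvd_mul_self_l a b : a ∣ a ⊗ b. Proof. exists b; ring. Qed.
Lemma dvd_mul_self_r a b : a ∣ b ⊗ a. Proof. exists b; ring. Qed.
Lemma dvd_add a b c : a ∣ b -> a ∣ c -> a ∣ b ⊕ c.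
Proof. intros [k ->] [l ->]. exists (k ⊕ l). ring. Qed.
Lemma dvd_le a b : a ∣ b -> b <> Z -> a ≼ b.
Proof. intros [k ->] H. apply le_mul_r. intros ->. apply H. ring. Qed.
Lemma dvd_add_inv a b c : a ∣ b ⊕ c -> a ∣ b -> a ∣ c.
Proof.
  intros [m Hm] [k Hk]. destruct (classic (a = Z)) as [->|Ha].
  - exists Z. rewrite mul0l in Hk. subst b. rewrite add0l, mul0l in Hm. rewrite Hm; ring.
  - assert (Hkm : k ≼ m).
    { apply (le_mul_can _ _ a Ha). rewrite (mulC k), (mulC m), <- Hk, <- Hm. apply le_addr. }
    apply ax_le in Hkm as [j Hj]. subst m. exists j. apply (addcanl _ _ b). rewrite Hm, Hk. ring.
Qed.
Lemma dvd_antisym a b : a ∣ b -> b ∣ a -> a = b.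
Proof.
  intros H1 H2. destruct (classic (a = Z)) as [->|Ha].
  - destruct H1 as [k ->]. ring.
  - destruct (classic (b = Z)) as [->|Hb].
    + destruct H2 as [k ->]. ring.
    + apply le_antisym; apply dvd_le; auto.
Qed.
Lemma dvd1 d : d ∣ I -> d = I.
Proof.
  intros H. pose proof (dvd_le _ _ H one_ne0) as Hl. apply le1 in Hl as [->|]; auto.
  destruct H as [k Hk]. rewrite mul0l in Hk. exfalso; apply one_ne0; auto.
Qed.
Lemma dvd_mulcan a b c : c <> Z -> c ⊗ a ∣ c ⊗ b -> a ∣ b.
Proof. intros Hc [k Hk]. exists k. apply (mulcan _ _ c Hc). rewrite (mulC b), Hk. ring. Qed.

Lemma dvd_divmod d x q r : x = q ⊗ d ⊕ r -> d ∣ x -> d ∣ r.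
Proof. intros E H. rewrite E in H. apply (dvd_add_inv _ (q ⊗ d)); auto. apply dvd_mull, dvd_refl. Qed.

Lemma least_S (x y : M) : x <> Z ->
  exists m, m <> Z /\ x ∣ m ⊗ y /\ forall c, x ∣ c ⊗ y -> m ∣ c.
Proof.
  intros Hx.
  set (f := Fand (Fnot (Feq (Tvar 0) Tzero)) (Fex 3 (Fand (Fle (Tvar 3) (Tmul (Tvar 0) (Tvar 2)))
              (Feq (Tmul (Tvar 0) (Tvar 2)) (Tmul (Tvar 1) (Tvar 3)))))).
  set (rho := fun i : nat => match i with 1 => x | _ => y end).
  assert (Hf : forall c, sat (upd rho 0 c) f <-> c <> Z /\ x ∣ c ⊗ y).
  { intros c. unfold f, rho. cbn. split.
    - intros [H1 [k [_ Hk]]]. split; auto. exists k; auto.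
    - intros [H1 [k Hk]]. split; auto. exists k. split; auto. rewrite Hk. rewrite mulC. apply le_mul_r; auto. }
  destruct (LNP f 0 rho) as [m [Hm Hmin]].
  - unfold f. d0.
  - exists x. apply Hf. split; auto. exists y. ring.
  - apply Hf in Hm as [Hm0 Hm]. exists m. split; auto. split; auto.
    intros c Hc. destruct (divmod c m Hm0) as [q [r [E Hr]]].
    destruct (classic (r = Z)) as [->|Hr0].
    + exists q. rewrite E. ring.
    + exfalso. apply (lt_not_le _ _ Hr). apply Hmin, Hf. split; auto.
      apply (dvd_add_inv _ (q ⊗ m ⊗ y)). replace (q ⊗ m ⊗ y ⊕ r ⊗ y) with (c ⊗ y) by (rewrite E; ring). auto.
      replace (q ⊗ m ⊗ y) with (q ⊗ (m ⊗ y)) by ring. apply dvd_mull; auto.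
Qed.

Definition prime (p : M) := I ≺ p /\ forall d, d ∣ p -> d = I \/ d = p.
Definition cop (x y : M) := forall d, d ∣ x -> d ∣ y -> d = I.

Lemma euclid p a b : prime p -> p ∣ a ⊗ b -> p ∣ a \/ p ∣ b.
Proof.
  intros [Hp Hpd] H. assert (Hp0 : p <> Z) by (intros ->; apply (lt_not_le _ _ Hp), le_0).
  destruct (least_S p b Hp0) as [m [Hm0 [Hm Hmin]]].
  assert (Hmp : m ∣ p) by (apply Hmin; apply dvd_mulr, dvd_refl).
  assert (Hma : m ∣ a) by (apply Hmin; auto).
  destruct (Hpd m Hmp) as [->| ->].
  - right. rewrite mul1l in Hm. auto.
  - left; auto.
Qed.

Lemma cop_sym x y : cop x y -> cop y x. Proof. intros H d H1 H2; auto. Qed.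

Lemma cop_dvd x y z : cop x y -> x ∣ y ⊗ z -> x ∣ z.
Proof.
  intros Hc H. destruct (classic (x = Z)) as [->|Hx].
  - assert (y = I) by (apply Hc; [apply dvd_0|apply dvd_refl]). subst. rewrite mul1l in H; auto.
  - destruct (least_S x z Hx) as [m [Hm0 [Hm Hmin]]].
    assert (m = I) by (apply Hc; apply Hmin; auto; apply dvd_mulr, dvd_refl). subst.
    rewrite mul1l in Hm; auto.
Qed.

Lemma gcd_decomp x y : x <> Z -> exists g a b, x = g ⊗ a /\ y = g ⊗ b /\ cop a b.
Proof.
  intros Hx. destruct (least_S x y Hx) as [m [Hm0 [Hm Hmin]]].
  assert (Hmx : m ∣ x) by (apply Hmin; apply dvd_mulr, dvd_refl).
  destruct Hmx as [g Hg].
  assert (Hgy : g ∣ y). { apply (dvd_mulcan _ _ m Hm0). rewrite <- Hg. auto. }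
  destruct Hgy as [b Hb]. exists g, m, b. split. rewrite Hg; ring. split; auto.
  intros d [m' Hm'] [b' Hb']. subst m b.
  assert (Hd0 : d <> Z) by (intros ->; apply Hm0; ring).
  assert (Hm'0 : m' <> Z) by (intros ->; apply Hm0; ring).
  assert (H : d ⊗ m' ∣ m') by (apply Hmin; exists b'; rewrite Hg, Hb; ring).
  apply dvd_le in H; auto. rewrite <- (mul1l m') in H at 2. apply le_mul_can in H; auto.
  apply le1 in H as [|]; auto. contradiction.
Qed.

Lemma prime_ne0 p : prime p -> p <> Z.
Proof. intros [Hp _] ->. apply (lt_not_le _ _ Hp), le_0. Qed.
Lemma prime_ne1 p : prime p -> p <> I.
Proof. intros [Hp _] ->. apply (lt_irrefl _ Hp). Qed.

Lemma prime_div (n : M) : n <> Z -> n <> I -> exists p, prime p /\ p ∣ n.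
Proof.
  intros Hn0 Hn1.
  set (f := Fand (Fle (Tadd Tone Tone) (Tvar 0)) (Fex 3 (Fand (Fle (Tvar 3) (Tvar 1))
              (Feq (Tvar 1) (Tmul (Tvar 0) (Tvar 3)))))).
  set (rho := fun i : nat => match i with _ => n end).
  assert (Hf : forall c, sat (upd rho 0 c) f <-> I ≺ c /\ c ∣ n).
  { intros c. unfold f, rho. cbn. rewrite lt_le. split.
    - intros [H1 [k [_ Hk]]]. split; auto. exists k; auto.
    - intros [H1 [k Hk]]. split; auto. exists k. split; auto. rewrite Hk. rewrite mulC. apply le_mul_r.
      intros ->. apply Hn0. rewrite Hk; ring. }
  destruct (LNP f 0 rho) as [p [Hp Hmin]].
  - unfold f. d0.
  - exists n. apply Hf. split. apply one_lt_ne; auto. apply dvd_refl.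
  - apply Hf in Hp as [Hp1 Hpn]. exists p. split; auto. split; auto.
    intros d Hd. destruct (classic (d = I)) as [|Hd1]; auto. right.
    assert (Hp0 : p <> Z) by (intros ->; apply (lt_not_le _ _ Hp1), le_0).
    assert (Hd0 : d <> Z) by (intros ->; destruct Hd as [k Hk]; apply Hp0; rewrite Hk; ring).
    apply le_antisym. apply dvd_le; auto. apply Hmin, Hf. split. apply one_lt_ne; auto. eapply dvd_trans; eauto.
Qed.

Lemma prime_cop p x : prime p -> ~ p ∣ x -> cop p x.
Proof.
  intros [Hp Hpd] Hn d H1 H2. destruct (Hpd d H1) as [| ->]; auto. contradiction.
Qed.

Lemma cop_mul a b c : cop a c -> cop b c -> cop (a ⊗ b) c.
Proof.
  intros Ha Hb d H1 H2. apply NNPP. intros Hd1.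
  destruct (classic (d = Z)) as [->|Hd0].
  - destruct H2 as [k Hk]. rewrite mul0l in Hk. subst c.
    assert (a = I) by (apply Ha; [apply dvd_refl|apply dvd_0]).
    assert (b = I) by (apply Hb; [apply dvd_refl|apply dvd_0]). subst.
    destruct H1 as [k' Hk']. rewrite mul0l in Hk'. apply one_ne0. rewrite <- Hk'; ring.
  - destruct (prime_div d Hd0 Hd1) as [p [Hp Hpd]].
    assert (Hpab : p ∣ a ⊗ b) by (apply (dvd_trans p d); auto).
    assert (Hpc : p ∣ c) by (apply (dvd_trans p d); auto).
    apply (prime_ne1 p Hp). destruct (euclid p a b Hp Hpab).
    + apply Ha; auto.
    + apply Hb; auto.
Qed.


Lemma rm_ex (a m : M) : exists r, m <> Z -> exists q, a = q ⊗ m ⊕ r /\ r ≺ m.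
Proof.
  destruct (classic (m = Z)) as [H|H].
  - exists Z. intros; contradiction.
  - destruct (divmod a m H) as [q [r Hr]]. exists r. intros _. eauto.
Qed.
Definition rm (a m : M) : M := proj1_sig (constructive_indefinite_description _ (rm_ex a m)).
Lemma rm_spec a m : m <> Z -> exists q, a = q ⊗ m ⊕ rm a m /\ rm a m ≺ m.
Proof. unfold rm. destruct (constructive_indefinite_description _ _) as [r Hr]. auto. Qed.
Lemma lt_ne0 (r m : M) : r ≺ m -> m <> Z.
Proof. intros H ->. apply (lt_not_le _ _ H), le_0. Qed.
Lemma rm_eq a m q r : a = q ⊗ m ⊕ r -> r ≺ m -> rm a m = r.
Proof.
  intros E Hr. destruct (rm_spec a m (lt_ne0 _ _ Hr)) as [q' [E' Hr']].
  rewrite E in E' at 1. destruct (divmod_uniq _ _ _ _ _ E' Hr Hr'). auto.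
Qed.
Lemma rm_lt a m : m <> Z -> rm a m ≺ m.
Proof. intros H. destruct (rm_spec a m H) as [q [_ Hq]]; auto. Qed.
Lemma rm_le a m : m <> Z -> rm a m ≼ a.
Proof. intros H. destruct (rm_spec a m H) as [q [E _]]. pose proof (le_addl (rm a m) (q ⊗ m)) as H'. rewrite <- E in H'. auto. Qed.
Lemma rm_addmul a m k : m <> Z -> rm (a ⊕ k ⊗ m) m = rm a m.
Proof.
  intros H. destruct (rm_spec a m H) as [q [E Hq]]. apply (rm_eq _ _ (q ⊕ k)); auto.
  rewrite E at 1. ring.
Qed.
Lemma rm_small r m : r ≺ m -> rm r m = r.
Proof. intros H. apply (rm_eq _ _ Z); auto. ring. Qed.

Definition Rb (a m r : M) := (exists q, q ≼ a /\ a = q ⊗ m ⊕ r) /\ r ⊕ I ≼ m.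
Definition dvdb (e a : M) := exists w, w ≼ a /\ a = e ⊗ w.
Definition copb (a b : M) := forall e, e ≼ a -> dvdb e a -> dvdb e b -> e = I.
Definition mdf (d i : M) := (i ⊕ I) ⊗ d ⊕ I.

Lemma Rb_iff a m r : m <> Z -> (Rb a m r <-> rm a m = r).
Proof.
  intros Hm. unfold Rb. split.
  - intros [[q [_ E]] H]. apply (rm_eq _ _ q); auto. apply (proj2 (lt_le _ _)); auto.
  - intros <-. destruct (rm_spec a m Hm) as [q [E Hq]]. split.
    + exists q. split; auto.
      pose proof (le_addr (q ⊗ m) (rm a m)) as H'. rewrite <- E in H'. eapply le_trans; [|exact H'].
      apply le_mul_r; auto.
    + apply (proj1 (lt_le _ _)); auto.
Qed.

Lemma dvdb_iff e a : a <> Z -> (dvdb e a <-> e ∣ a).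
Proof.
  intros Ha. unfold dvdb. split.
  - intros [w [_ E]]. exists w; auto.
  - intros [w E]. exists w. split; auto. rewrite E, mulC. apply le_mul_r. intros ->. apply Ha. rewrite E; ring.
Qed.

Lemma copb_iff a b : a <> Z -> b <> Z -> (copb a b <-> cop a b).
Proof.
  intros Ha Hb. unfold copb, cop. split.
  - intros H e H1 H2. apply H. apply dvd_le; auto. apply dvdb_iff; auto. apply dvdb_iff; auto.
  - intros H e _ H1 H2. apply H. apply dvdb_iff; auto. apply dvdb_iff; auto.
Qed.

Lemma mdf_ne0 d i : mdf d i <> Z.
Proof. apply ax_succ0. Qed.


Definition fall_le v t g := Fall v (Fimp (Fle (Tvar v) t) g).
Definition fex_le v t g := Fex v (Fand (Fle (Tvar v) t) g).
Definition fdvd e a w := fex_le w a (Feq a (Tmul e (Tvar w))).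
Definition fR a m r q := Fand (fex_le q a (Feq a (Tadd (Tmul (Tvar q) m) r))) (Fle (Tadd r Tone) m).
Definition tmd d i := Tadd (Tmul (Tadd i Tone) d) Tone.
Definition fcop a b e w := fall_le e a (Fimp (fdvd (Tvar e) a w) (Fimp (fdvd (Tvar e) b w) (Feq (Tvar e) Tone))).

Ltac d0' := unfold fall_le, fex_le, fdvd, fR, tmd, fcop; d0.
Ltac s1' := unfold fall_le, fex_le, fdvd, fR, tmd, fcop; s1.

Lemma inv_mod Q m : m <> Z -> cop Q m -> exists u w, Q ⊗ u ⊕ I = m ⊗ w.
Proof.
  intros Hm Hc.
  set (f := Fand (Fnot (Feq (Tvar 0) Tzero)) (fex_le 3 (Tvar 2) (fex_le 4 (Tadd (Tmul (Tvar 1) (Tvar 3)) (Tvar 0))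
     (Feq (Tadd (Tmul (Tvar 1) (Tvar 3)) (Tvar 0)) (Tmul (Tvar 2) (Tvar 4)))))).
  set (rho := fun i : nat => match i with 1 => Q | _ => m end).
  assert (Hf : forall g, sat (upd rho 0 g) f <-> g <> Z /\ exists u w, Q ⊗ u ⊕ g = m ⊗ w).
  { intros g. unfold f, rho, fex_le. cbn. split.
    - intros [H1 [u [_ [w [_ E]]]]]. eauto.
    - intros [H1 [u [w E]]]. split; auto. destruct (divmod u m Hm) as [a [u0 [Eu Hu0]]].
      subst u.
      assert (Hle : Q ⊗ a ≼ w).
      { apply (le_mul_can _ _ m Hm). rewrite (mulC w), <- E. apply ax_le. exists (Q ⊗ u0 ⊕ g). ring. }
      apply ax_le in Hle as [k Hk]. subst w.
      assert (E2 : Q ⊗ u0 ⊕ g = m ⊗ k).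
      { apply (addcan _ _ (m ⊗ (Q ⊗ a))). transitivity (Q ⊗ (a ⊗ m ⊕ u0) ⊕ g). ring. rewrite E. ring. }
      exists u0. split. apply lt_weak; auto. exists k. split; auto. rewrite E2, mulC. apply le_mul_r; auto. }
  destruct (LNP f 0 rho) as [g [Hg Hmin]].
  - unfold f. d0'.
  - exists m. apply Hf. split; auto. exists Z, I. ring.
  - apply Hf in Hg as [Hg0 [ug [wg Eg]]].
    assert (Hdiv : forall h uh wh, Q ⊗ uh ⊕ h = m ⊗ wh -> g ∣ h).
    { intros h uh wh Eh. destruct (divmod h g Hg0) as [a [r [Eh2 Hr]]].
      destruct (classic (r = Z)) as [->|Hr0]. { exists a. rewrite Eh2. ring. }
      exfalso. destruct (ax_pred m Hm) as [m1 Em].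
      set (X := Q ⊗ (uh ⊕ a ⊗ ug ⊗ m1) ⊕ r).
      assert (EX : X ⊕ a ⊗ g ⊗ m = (wh ⊕ a ⊗ m1 ⊗ wg) ⊗ m).
      { unfold X. transitivity (Q ⊗ uh ⊕ h ⊕ a ⊗ m1 ⊗ (Q ⊗ ug ⊕ g)).
        rewrite Eh2, Em. ring. rewrite Eh, Eg. ring. }
      destruct (divmod X m Hm) as [q [r' [EX2 Hr']]].
      assert (Hr'0 : r' = Z).
      { rewrite EX2 in EX. assert (E3 : (q ⊕ a ⊗ g) ⊗ m ⊕ r' = (wh ⊕ a ⊗ m1 ⊗ wg) ⊗ m ⊕ Z).
        { rewrite <- EX. ring. }
        apply divmod_uniq in E3; auto. apply E3. split. apply le_0. auto. }
      subst r'. apply (lt_not_le _ _ Hr). apply Hmin, Hf. split; auto.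
      exists (uh ⊕ a ⊗ ug ⊗ m1), q. fold X. rewrite EX2. ring. }
    destruct (ax_pred m Hm) as [m1 Em].
    assert (g = I).
    { apply Hc. apply (Hdiv Q m1 Q). rewrite Em. ring.
      apply (Hdiv m Z I). ring. }
    subst g. eauto.
Qed.

Lemma crt_step c Q m s : cop Q m -> s ≺ m -> exists t, rm (c ⊕ Q ⊗ t) m = s.
Proof.
  intros Hc Hs. pose proof (lt_ne0 _ _ Hs) as Hm.
  destruct (inv_mod Q m Hm Hc) as [u [w Hw]]. destruct (ax_pred m Hm) as [m1 Em].
  exists (u ⊗ (c ⊕ m1 ⊗ s)).
  destruct (divmod (c ⊕ Q ⊗ (u ⊗ (c ⊕ m1 ⊗ s))) m Hm) as [q [r [E Hr]]].
  assert (E2 : (q ⊕ s) ⊗ m ⊕ r = (w ⊗ (c ⊕ m1 ⊗ s)) ⊗ m ⊕ s).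
  { transitivity (c ⊕ Q ⊗ (u ⊗ (c ⊕ m1 ⊗ s)) ⊕ m ⊗ s). rewrite E. ring.
    transitivity ((Q ⊗ u ⊕ I) ⊗ (c ⊕ m1 ⊗ s) ⊕ s). rewrite Em. ring. rewrite Hw. ring. }
  apply divmod_uniq in E2; auto. destruct E2 as [_ ->]. apply (rm_eq _ _ q); auto.
Qed.

Lemma rm_shift c Q t m : m ∣ Q -> rm (c ⊕ Q ⊗ t) m = rm c m.
Proof.
  intros [k ->]. destruct (classic (m = Z)) as [->|Hm].
  - rewrite mul0l, mul0l, ax_add0. auto.
  - replace (c ⊕ m ⊗ k ⊗ t) with (c ⊕ (k ⊗ t) ⊗ m) by ring. apply rm_addmul; auto.
Qed.

Lemma multiples (L : M) : exists D, D <> Z /\ forall n, I ≼ n -> n ≼ L -> n ∣ D.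
Proof.
  cut (exists D, ~ D = Z /\ forall n, n ≼ L -> I ≼ n -> dvdb n D).
  { intros [D [HD H]]. exists D. split; auto. intros n H1 H2. apply dvdb_iff; auto. }
  revert L.
  sind (Fex 1 (Fand (Fnot (Feq (Tvar 1) Tzero)) (fall_le 2 (Tvar 0) (Fimp (Fle Tone (Tvar 2)) (fdvd (Tvar 2) (Tvar 1) 3)))))
    (fun _ : nat => (Z : M)).
  - exists I. split. apply one_ne0. intros n H1 H2. apply le0_eq in H1. subst. exfalso.
    apply (lt_not_le Z I); auto. apply lt_le. rewrite add0l. apply le_refl.
  - intros L [D [HD H]]. exists (D ⊗ (L ⊕ I)). split.
    + intros E. apply mul_eq0 in E as [E|E]; auto. apply (ax_succ0 L); auto.
    + intros n H1 H2. apply dvdb_iff. intros E. apply mul_eq0 in E as [E|E]; auto. apply (ax_succ0 L); auto.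
      apply leS in H1 as [H1| ->].
      * apply dvd_mulr. apply dvdb_iff; auto.
      * apply dvd_mull, dvd_refl.
Qed.

Lemma md_cop D L i j : (forall n, I ≼ n -> n ≼ L -> n ∣ D) -> i ≺ j -> j ≼ L -> cop (mdf D i) (mdf D j).
Proof.
  intros HD Hij HjL e H1 H2. apply NNPP. intros He1.
  assert (He0 : e <> Z). { intros ->. destruct H1 as [k Hk]. apply (mdf_ne0 D i). rewrite Hk; ring. }
  destruct (prime_div e He0 He1) as [p [Hp Hpe]].
  assert (Hp1 : p ∣ mdf D i) by (apply (dvd_trans p e); auto).
  assert (Hp2 : p ∣ mdf D j) by (apply (dvd_trans p e); auto).
  apply lt_le, ax_le in Hij as [k Hk].
  assert (Hp3 : p ∣ (k ⊕ I) ⊗ D).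
  { apply (dvd_add_inv _ (mdf D i)); auto. replace (mdf D i ⊕ (k ⊕ I) ⊗ D) with (mdf D j); auto.
    unfold mdf. rewrite <- Hk. ring. }
  assert (HpD : p ∣ D).
  { destruct (euclid _ _ _ Hp Hp3) as [H|H]; auto. apply (dvd_trans p (k ⊕ I)); auto. apply HD.
    apply le_addl. eapply le_trans; [|exact HjL]. rewrite <- Hk. apply ax_le. exists i. ring. }
  apply (prime_ne1 p Hp). apply dvd1. apply (dvd_add_inv _ ((i ⊕ I) ⊗ D)); auto. apply dvd_mull; auto.
Qed.


Lemma copb_cop a b : a <> Z -> b <> Z -> copb a b -> cop a b.
Proof. intros. apply copb_iff; auto. Qed.
Lemma cop_copb a b : a <> Z -> b <> Z -> cop a b -> copb a b.
Proof. intros. apply copb_iff; auto. Qed.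

Lemma crt_ext (c d y v d' : M) :
  d' <> Z -> (forall n, I ≼ n -> n ≼ y ⊕ I -> n ∣ d') ->
  (forall i, i ≼ y -> rm c (mdf d i) ≺ mdf d' i) -> v ≺ mdf d' (y ⊕ I) ->
  exists c', (forall i, i ≼ y -> rm c' (mdf d' i) = rm c (mdf d i)) /\ rm c' (mdf d' (y ⊕ I)) = v.
Proof.
  intros Hd' HD Ht Hv. set (L := y ⊕ I).
  cut (forall k, exists c' Q, ~ Q = Z /\
     (forall i, i ≼ L -> i ⊕ I ≼ k -> dvdb (mdf d' i) Q /\
        ((i ≼ y -> exists r, r ≼ c /\ (Rb c (mdf d i) r /\ Rb c' (mdf d' i) r)) /\
         (i = y ⊕ I -> Rb c' (mdf d' i) v))) /\
     (forall j, j ≼ L -> k ≼ j -> copb Q (mdf d' j))).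
  { intros H. destruct (H (L ⊕ I)) as [c' [Q [_ [H1 _]]]]. exists c'. split.
    - intros i Hi. destruct (H1 i) as [_ [H2 _]].
      + unfold L. eapply le_trans; [exact Hi|]. apply le_addr.
      + apply le_add_mono. unfold L. eapply le_trans; [exact Hi|]. apply le_addr.
      + destruct (H2 Hi) as [r [_ [R1 R2]]]. apply Rb_iff in R1, R2; try apply mdf_ne0. congruence.
    - destruct (H1 L) as [_ [_ H2]]. apply le_refl. apply le_refl. apply Rb_iff. apply mdf_ne0. apply H2. auto. }
  apply (ind1 (Fex 7 (Fex 8 (Fand (Fnot (Feq (Tvar 8) Tzero))
  (Fand (fall_le 9 (Tvar 1) (Fimp (Fle (Tadd (Tvar 9) Tone) (Tvar 0))
      (Fand (fdvd (tmd (Tvar 2) (Tvar 9)) (Tvar 8) 10)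
        (Fand (Fimp (Fle (Tvar 9) (Tvar 5)) (fex_le 12 (Tvar 3) (Fand (fR (Tvar 3) (tmd (Tvar 4) (Tvar 9)) (Tvar 12) 10) (fR (Tvar 7) (tmd (Tvar 2) (Tvar 9)) (Tvar 12) 10))))
              (Fimp (Feq (Tvar 9) (Tadd (Tvar 5) Tone)) (fR (Tvar 7) (tmd (Tvar 2) (Tvar 9)) (Tvar 6) 10))))))
     (fall_le 9 (Tvar 1) (Fimp (Fle (Tvar 0) (Tvar 9)) (fcop (Tvar 8) (tmd (Tvar 2) (Tvar 9)) 11 10)))))))
    0 (fun i : nat => match i with 1 => L | 2 => d' | 3 => c | 4 => d | 5 => y | _ => v end)).
  - s1'.
  - intros k. cbn. reflexivity.
  - exists Z, I. split. apply one_ne0. split.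
    + intros i _ H. exfalso. apply le0_eq in H. eapply ax_succ0; eauto.
    + intros j _ _. apply cop_copb. apply one_ne0. apply mdf_ne0. intros e H1 _. apply dvd1; auto.
  - intros k [c' [Q [HQ [H1 H2]]]]. destruct (classic (k ≼ L)) as [HkL|HkL].
    + set (s := match excluded_middle_informative (k ≼ y) with left _ => rm c (mdf d k) | right _ => v end).
      assert (Hs : s ≺ mdf d' k).
      { unfold s. destruct (excluded_middle_informative (k ≼ y)) as [Hky|Hky]. apply Ht; auto.
        apply leS in HkL as [HkL|HkL]. contradiction. rewrite HkL. auto. }
      assert (Hc : cop Q (mdf d' k)) by (apply (copb_cop _ _ HQ (mdf_ne0 _ _)), H2; auto; apply le_refl).
      destruct (crt_step c' Q (mdf d' k) s Hc Hs) as [t Hts].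
      exists (c' ⊕ Q ⊗ t), (Q ⊗ mdf d' k). split.
      { intros E. apply mul_eq0 in E as [E|E]; auto. apply (mdf_ne0 d' k); auto. }
      split.
      * intros i HiL Hik. apply le_add_can in Hik. apply ax_le in Hik as [z Hz].
        assert (Hne : Q ⊗ mdf d' k <> Z).
        { intros E. apply mul_eq0 in E as [E|E]; auto. apply (mdf_ne0 d' k); auto. }
        destruct (classic (z = Z)) as [->|Hz0].
        -- rewrite add0l in Hz. subst i. split. apply dvdb_iff; auto. apply dvd_mull, dvd_refl.
           split.
           ++ intros Hky. exists (rm c (mdf d k)). split. apply rm_le, mdf_ne0. split; apply Rb_iff; try apply mdf_ne0; auto.
              rewrite Hts. unfold s. destruct (excluded_middle_informative (k ≼ y)); auto. contradiction.
           ++ intros Hky. apply Rb_iff. apply mdf_ne0. rewrite Hts. unfold s.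
              destruct (excluded_middle_informative (k ≼ y)) as [Hy|]; auto. exfalso. rewrite Hky in Hy.
              apply (lt_irrefl y). apply le_S_lt; auto.
        -- destruct (ax_pred _ Hz0) as [z' ->]. destruct (H1 i HiL) as [Hd [Ha Hb]].
           { apply ax_le. exists z'. rewrite <- Hz. ring. }
           assert (Hdv : mdf d' i ∣ Q) by (apply dvdb_iff; auto).
           split. apply dvdb_iff; auto. apply dvd_mulr; auto.
           assert (Hrm : rm (c' ⊕ Q ⊗ t) (mdf d' i) = rm c' (mdf d' i)) by (apply rm_shift; auto).
           split.
           ++ intros Hy. destruct (Ha Hy) as [r [Hr [R1 R2]]]. exists r. split; auto. split; auto.
              apply Rb_iff. apply mdf_ne0. rewrite Hrm. apply Rb_iff; auto. apply mdf_ne0.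
           ++ intros Hy. apply Rb_iff. apply mdf_ne0. rewrite Hrm. apply Rb_iff. apply mdf_ne0. auto.
      * intros j HjL Hkj. apply cop_copb.
        { intros E. apply mul_eq0 in E as [E|E]; auto. apply (mdf_ne0 d' k); auto. }
        apply mdf_ne0.
        apply cop_mul.
        -- apply (copb_cop _ _ HQ (mdf_ne0 _ _)), H2; auto. eapply le_trans; [|exact Hkj]. apply le_addr.
        -- apply (md_cop d' L); auto. apply le_S_lt; auto.
    + exists c', Q. split; auto. split.
      * intros i HiL Hik. apply H1; auto. apply not_le in HkL. apply lt_S_le.
        apply (le_lt_trans _ L); auto.
      * intros j HjL Hkj. exfalso. apply not_le in HkL. apply (lt_not_le _ _ HkL).
        eapply le_trans; [|exact HjL]. eapply le_trans; [|exact Hkj]. apply le_addr.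
Qed.


Definition fCode X Y C D Iv Qv Rv :=
  Fand (Fnot (Feq (Tvar D) Tzero)) (Fand (fR (Tvar C) (tmd (Tvar D) Tzero) Tone Qv)
    (fall_le Iv (Tvar Y) (Fimp (Fle (Tadd (Tvar Iv) Tone) (Tvar Y))
      (fex_le Rv (Tvar C) (Fand (fR (Tvar C) (tmd (Tvar D) (Tvar Iv)) (Tvar Rv) Qv)
         (fR (Tvar C) (tmd (Tvar D) (Tadd (Tvar Iv) Tone)) (Tmul (Tvar Rv) (Tvar X)) Qv)))))).

Definition CodeB (x y c d : M) := ~ d = Z /\ (Rb c (mdf d Z) I /\ forall i, i ≼ y -> i ⊕ I ≼ y ->
   exists r, r ≼ c /\ (Rb c (mdf d i) r /\ Rb c (mdf d (i ⊕ I)) (r ⊗ x))).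
Definition Code (x y c d : M) := d <> Z /\ rm c (mdf d Z) = I /\
   forall i, i ⊕ I ≼ y -> rm c (mdf d (i ⊕ I)) = rm c (mdf d i) ⊗ x.

Lemma CodeB_iff x y c d : CodeB x y c d <-> Code x y c d.
Proof.
  unfold CodeB, Code. split.
  - intros [H0 [H1 H2]]. split; auto. split. apply Rb_iff; auto. apply mdf_ne0.
    intros i Hi. destruct (H2 i) as [r [_ [R1 R2]]]; auto.
    eapply le_trans; [|exact Hi]. apply le_addr.
    apply Rb_iff in R1, R2; try apply mdf_ne0. congruence.
  - intros [H0 [H1 H2]]. split; auto. split. apply Rb_iff; auto. apply mdf_ne0.
    intros i _ Hi. exists (rm c (mdf d i)). split. apply rm_le, mdf_ne0.
    split; apply Rb_iff; try apply mdf_ne0; auto.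
Qed.

Lemma mdf_mono d d' i : d ≼ d' -> mdf d i ≼ mdf d' i.
Proof. intros H. unfold mdf. apply le_add_mono. rewrite !(mulC (i ⊕ I)). apply le_mul_mono; auto. Qed.

Lemma code_exists (x y : M) : exists c d, Code x y c d.
Proof.
  cut (exists c d, CodeB x y c d).
  { intros [c [d H]]. exists c, d. apply CodeB_iff; auto. }
  revert y.
  apply (ind1 (Fex 2 (Fex 3 (fCode 1 0 2 3 4 5 6))) 0 (fun _ : nat => x)
    (fun y => exists c d, CodeB x y c d)).
  - unfold fCode. s1'.
  - intros y. cbn. reflexivity.
  - exists I, I. apply CodeB_iff. split. apply one_ne0. split.
    + apply rm_small. apply le_S_lt. unfold mdf. apply ax_le. exists Z. ring.
    + intros i Hi. exfalso. apply le0_eq in Hi. eapply ax_succ0; eauto.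
  - intros y [c [d Hc]]. apply CodeB_iff in Hc. destruct Hc as [Hd [H0 Hs]].
    set (v := rm c (mdf d y) ⊗ x).
    destruct (multiples (y ⊕ I)) as [D [HD0 HD]].
    set (d' := D ⊗ (d ⊕ v ⊕ I)).
    assert (Hd'0 : d' <> Z).
    { unfold d'. intros E. apply mul_eq0 in E as [E|E]; auto. eapply ax_succ0; eauto. }
    assert (Hdd : d ⊕ v ⊕ I ≼ d').
    { unfold d'. rewrite mulC. apply le_mul_r; auto. }
    assert (Hdd' : d ≼ d'). { eapply le_trans; [|exact Hdd]. rewrite addA. apply le_addr. }
    destruct (crt_ext c d y v d') as [c' [Hc1 Hc2]]; auto.
    + intros n H1 H2. unfold d'. apply dvd_mulr; auto.
    + intros i _. eapply lt_le_trans. apply rm_lt, mdf_ne0. apply mdf_mono; auto.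
    + apply le_S_lt. unfold mdf. apply le_add_mono. apply (le_trans _ d').
      * eapply le_trans; [|exact Hdd]. apply ax_le. exists (d ⊕ I). ring.
      * rewrite mulC. apply le_mul_r. intros E; eapply ax_succ0; eauto.
    + exists c', d'. apply CodeB_iff. split; auto. split.
      * rewrite Hc1; auto. apply le_0.
      * intros i Hi. apply le_add_can in Hi. destruct (classic (i ⊕ I ≼ y)) as [Hiy|Hiy].
        -- rewrite (Hc1 (i ⊕ I) Hiy), (Hc1 i). apply Hs; auto. eapply le_trans; [|exact Hiy]. apply le_addr.
        -- assert (i = y). { apply le_antisym; auto. apply NNPP. intros Hn. apply Hiy. apply lt_S_le. apply not_le; auto. }
           subst i. rewrite Hc2, Hc1; auto; apply le_refl.
Qed.

Lemma code_uniq x y c d c2 d2 : Code x y c d -> Code x y c2 d2 ->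
  forall i, i ≼ y -> rm c (mdf d i) = rm c2 (mdf d2 i).
Proof.
  intros [Hd [H0 Hs]] [Hd2 [H02 Hs2]].
  cut (forall i, i ≼ y -> exists r, r ≼ c /\ (Rb c (mdf d i) r /\ Rb c2 (mdf d2 i) r)).
  { intros H i Hi. destruct (H i Hi) as [r [_ [R1 R2]]]. apply Rb_iff in R1, R2; try apply mdf_ne0. congruence. }
  apply (ind1 (Fimp (Fle (Tvar 0) (Tvar 1)) (fex_le 6 (Tvar 2) (Fand (fR (Tvar 2) (tmd (Tvar 3) (Tvar 0)) (Tvar 6) 7)
     (fR (Tvar 4) (tmd (Tvar 5) (Tvar 0)) (Tvar 6) 7)))) 0
    (fun i : nat => match i with 1 => y | 2 => c | 3 => d | 4 => c2 | _ => d2 end)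
    (fun i => i ≼ y -> exists r, r ≼ c /\ (Rb c (mdf d i) r /\ Rb c2 (mdf d2 i) r))).
  - s1'.
  - intros i. cbn. reflexivity.
  - intros _. exists I. split. rewrite <- H0. apply rm_le, mdf_ne0.
    split; apply Rb_iff; try apply mdf_ne0; auto.
  - intros i IH Hi. destruct IH as [r [_ [R1 R2]]].
    { eapply le_trans; [|exact Hi]. apply le_addr. }
    apply Rb_iff in R1, R2; try apply mdf_ne0.
    exists (rm c (mdf d (i ⊕ I))). split. apply rm_le, mdf_ne0.
    split; apply Rb_iff; try apply mdf_ne0; auto.
    rewrite Hs, Hs2; auto. congruence.
Qed.

Lemma code_ex x y : exists cd : M * M, Code x y (fst cd) (snd cd).
Proof. destruct (code_exists x y) as [c [d H]]. exists (c, d). auto. Qed.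

Definition ex (x y : M) : M :=
  let cd := proj1_sig (constructive_indefinite_description _ (code_ex x y)) in rm (fst cd) (mdf (snd cd) y).

Lemma ex_spec x y c d : Code x y c d -> ex x y = rm c (mdf d y).
Proof.
  intros H. unfold ex. destruct (constructive_indefinite_description _ _) as [[c' d'] H']. cbn.
  apply (code_uniq x y); auto. apply le_refl.
Qed.

Lemma ex_isdef : IsDefExp ex.
Proof.
  split; [|split].
  - intros x. destruct (code_exists x Z) as [c [d Hc]]. rewrite (ex_spec _ _ c d); auto. apply Hc.
  - intros x y. destruct (code_exists x (y ⊕ I)) as [c [d Hc]].
    assert (Hc' : Code x y c d).
    { destruct Hc as [H1 [H2 H3]]. split; auto. split; auto. intros i Hi. apply H3.
      eapply le_trans; [exact Hi|]. apply le_addr. }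
    rewrite (ex_spec _ _ c d Hc), (ex_spec _ _ c d Hc'). apply Hc. apply le_refl.
  - exists (Fex 3 (Fex 4 (Fand (fCode 0 1 3 4 5 6 7) (fR (Tvar 3) (tmd (Tvar 4) (Tvar 1)) (Tvar 2) 6)))).
    split. unfold fCode. s1'.
    intros rho.
    assert (E : sat rho (Fex 3 (Fex 4 (Fand (fCode 0 1 3 4 5 6 7) (fR (Tvar 3) (tmd (Tvar 4) (Tvar 1)) (Tvar 2) 6))))
       <-> exists c d, CodeB (rho 0) (rho 1) c d /\ Rb c (mdf d (rho 1)) (rho 2)) by (cbn; reflexivity).
    rewrite E. split.
    + intros [c [d [Hc HR]]]. apply CodeB_iff in Hc. apply Rb_iff in HR; [|apply mdf_ne0].
      rewrite (ex_spec _ _ c d); auto.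
    + intros Hz. destruct (code_exists (rho 0) (rho 1)) as [c [d Hc]]. exists c, d. split.
      apply CodeB_iff; auto. apply Rb_iff. apply mdf_ne0. rewrite <- Hz. symmetry. apply ex_spec; auto.
Qed.


Fixpoint pw (x : M) (k : nat) : M := match k with O => I | S k => pw x k ⊗ x end.

Lemma pw_add x a b : pw x (a + b) = pw x a ⊗ pw x b.
Proof. induction b; cbn. rewrite Nat.add_0_r. ring. rewrite Nat.add_succ_r. cbn. rewrite IHb. ring. Qed.
Lemma pw_mul x a b : pw x (a * b) = pw (pw x a) b.
Proof. induction b; cbn. rewrite Nat.mul_0_r. auto. rewrite Nat.mul_succ_r, pw_add, IHb. ring. Qed.
Lemma pw_mulbase x y k : pw (x ⊗ y) k = pw x k ⊗ pw y k.
Proof. induction k; cbn. ring. rewrite IHk. ring. Qed.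
Lemma pw_mono x y k : x ≼ y -> pw x k ≼ pw y k.
Proof. intros H. induction k; cbn. apply le_refl. apply le_mul2; auto. Qed.
Lemma pw_ne0 x k : x <> Z -> pw x k <> Z.
Proof. intros H. induction k; cbn. apply one_ne0. intros E. apply mul_eq0 in E as [|]; auto. Qed.
Lemma lt_mul_l (u x y : M) : u <> Z -> x ≺ y -> u ⊗ x ≺ u ⊗ y.
Proof.
  intros Hu H. apply le_S_lt. apply lt_S_le in H. apply ax_le in H as [z Hz]. subst y.
  apply ax_le. destruct (ax_pred u Hu) as [u' ->]. exists (u' ⊕ z ⊗ (u' ⊕ I)). ring.
Qed.
Lemma pw_strict x y k : x ≺ y -> pw x (S k) ≺ pw y (S k).
Proof.
  intros H. cbn. apply (le_lt_trans _ (pw y k ⊗ x)). apply le_mul_mono, pw_mono, lt_weak, H.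
  apply lt_mul_l; auto. apply pw_ne0. intros ->. apply (lt_not_le _ _ H), le_0.
Qed.
Lemma pw_mono_exp x a b : I ≼ x -> (a <= b)%nat -> pw x a ≼ pw x b.
Proof.
  intros Hx Hab. replace b with (a + (b - a))%nat by lia. rewrite pw_add.
  replace (pw x a) with (pw x a ⊗ I) at 1 by ring. rewrite !(mulC (pw x a)). apply le_mul_mono.
  clear Hab. induction (b - a)%nat; cbn. apply le_refl. eapply le_trans; [exact IHn|]. apply le_mul_r.
  intros ->. apply (lt_not_le Z I); auto. apply le_S_lt. rewrite add0l. apply le_refl.
Qed.

Lemma num_add a b : (num (a + b) : M) = num a ⊕ num b.
Proof. induction b; cbn. rewrite Nat.add_0_r. ring. rewrite Nat.add_succ_r. cbn. rewrite IHb. ring. Qed.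
Lemma num_mul a b : (num (a * b) : M) = num a ⊗ num b.
Proof. induction b; cbn. rewrite Nat.mul_0_r. cbn. ring. rewrite Nat.mul_succ_r, num_add, IHb. cbn. ring. Qed.
Lemma num_le a b : (a <= b)%nat -> (num a : M) ≼ num b.
Proof. intros H. replace b with ((b - a) + a)%nat by lia. rewrite num_add. apply le_addl. Qed.
Lemma pw_num a k : pw (num a) k = (num (a ^ k) : M).
Proof. induction k; cbn. ring. rewrite IHk, Nat.mul_comm, num_mul. ring. Qed.
Lemma num_le_inv (x : M) N : x ≼ num N -> exists k, x = num k.
Proof.
  induction N; cbn; intros H. exists 0%nat. apply le0_eq; auto.
  apply leS in H as [H|H]; auto. exists (S N); auto.
Qed.

Lemma isdef_num (ex' : M -> M -> M) : IsDefExp ex' -> forall x k, ex' x (num k) = pw x k.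
Proof.
  intros [H0 [HS _]] x k. induction k; cbn. apply H0. rewrite HS, IHk. auto.
Qed.


Section E.
Variable A : M -> Prop.
Variable e : M -> M -> M.
Hypothesis HE : ExpPrime A e.
Hypothesis HE5 : E5' A e.
Hypothesis HE8 : E8 A e.

Lemma A0 : A Z. Proof. apply HE. Qed.
Lemma A1 : A I. Proof. apply HE. Qed.
Lemma Aadd x y : A x -> A y -> A (x ⊕ y). Proof. apply HE. Qed.
Lemma Apred x : A x -> x <> Z -> exists z, A z /\ x = z ⊕ I.
Proof. destruct HE as [[_ [_ [_ [_ [_ [H _]]]]]] _]. apply H. Qed.
Lemma Ale x y : A x -> A y -> x ≼ y -> exists z, A z /\ x ⊕ z = y.
Proof. destruct HE as [[_ [_ [_ [_ [_ [_ [_ [_ [_ [_ [H _]]]]]]]]]]] _]. intros; apply H; auto. Qed.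
Lemma e1 x y : A y -> ((x = I \/ y = Z) <-> e x y = I). Proof. apply HE. Qed.
Lemma e2 x y : A y -> x <> Z -> e x y <> Z. Proof. apply HE. Qed.
Lemma e3 x : e x I = x. Proof. apply HE. Qed.
Lemma e4 x y z : A y -> A z -> e x (y ⊕ z) = e x y ⊗ e x z. Proof. apply HE. Qed.

Lemma Anum k : A (num k). Proof. induction k; cbn. apply A0. apply Aadd; auto. apply A1. Qed.
Lemma e_num x k : e x (num k) = pw x k.
Proof.
  induction k; cbn. apply e1. apply A0. auto. rewrite e4, IHk, e3; auto. apply Anum. apply A1.
Qed.
Lemma e_mul x y n : A n -> e (x ⊗ y) n = e x n ⊗ e y n. Proof. intros; apply HE5; auto. Qed.
Lemma e_cop x y n : A n -> cop x y -> cop (e x n) (e y n). Proof. intros; apply HE8; auto. Qed.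
Lemma e_one x n : A n -> n <> Z -> e x n = I -> x = I.
Proof. intros Hn Hn0 H. apply e1 in H as [|]; auto. contradiction. Qed.
Lemma e_of1 n : A n -> e I n = I. Proof. intros Hn. apply e1; auto. Qed.
Lemma e_xdvd x n : A n -> n <> Z -> x ∣ e x n.
Proof.
  intros Hn Hn0. destruct (Apred n Hn Hn0) as [m [Hm ->]]. rewrite e4, e3; auto. apply dvd_mull, dvd_refl.
  apply A1.
Qed.
Lemma e_dvd_mono d x n : A n -> d ∣ x -> e d n ∣ e x n.
Proof. intros Hn [k ->]. rewrite e_mul; auto. apply dvd_mul_self_l. Qed.

Lemma e_prime p x n : A n -> prime p -> p ∣ e x n -> p ∣ x.
Proof.
  intros Hn Hp H. apply NNPP. intros Hpx. pose proof (prime_cop p x Hp Hpx) as Hc.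
  apply (e_cop _ _ I A1) in Hc. rewrite e3 in Hc. 
  apply (prime_ne1 p Hp). apply (HE8 p x I n A1 Hn (prime_cop p x Hp Hpx)); rewrite ?e3; auto. apply dvd_refl.
Qed.

Lemma e_cancel d z n : A n -> n <> Z -> d <> Z -> e d n ∣ e z n -> d ∣ z.
Proof.
  intros Hn Hn0 Hd H. destruct (gcd_decomp d z Hd) as [g [a [b [Ed [Ez Hab]]]]].
  subst d z. rewrite !e_mul in H; auto.
  assert (Hg : e g n <> Z) by (apply e2; auto; intros ->; apply Hd; ring).
  apply dvd_mulcan in H; auto.
  assert (Ha : e a n = I) by (apply (e_cop a b n Hn Hab); auto; apply dvd_refl).
  apply e_one in Ha; auto. subst a. exists b. ring.
Qed.

Lemma cop_third u v w n : A n -> n <> Z -> cop u v -> e u n ⊕ e v n = e w n -> cop u w.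
Proof.
  intros Hn Hn0 Huv E h H1 H2.
  assert (Hhv : cop h v).
  { intros g G1 G2. apply Huv; auto. apply (dvd_trans g h); auto. }
  assert (Hev : e h n ∣ e v n).
  { apply (dvd_add_inv _ (e u n)). rewrite E. apply e_dvd_mono; auto. apply e_dvd_mono; auto. }
  apply (e_one h n); auto. apply (e_cop h v n Hn Hhv); auto. apply dvd_refl.
Qed.

Lemma reduce_cop x y z n : A n -> n <> Z -> x <> Z -> y <> Z -> z <> Z -> e x n ⊕ e y n = e z n ->
  exists x1 y1 z1, x1 <> Z /\ y1 <> Z /\ z1 <> Z /\ cop x1 y1 /\ cop x1 z1 /\ cop y1 z1 /\
    e x1 n ⊕ e y1 n = e z1 n.
Proof.
  intros Hn Hn0 Hx Hy Hz E. destruct (gcd_decomp x y Hx) as [g [x1 [y1 [Ex [Ey Hc]]]]].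
  subst x y.
  assert (Hg : g <> Z) by (intros ->; apply Hx; ring).
  assert (Heg : e g n <> Z) by (apply e2; auto).
  assert (Hgz : g ∣ z).
  { apply (e_cancel g z n); auto. rewrite <- E, !e_mul; auto. exists (e x1 n ⊕ e y1 n). ring. }
  destruct Hgz as [z1 ->].
  rewrite !e_mul in E; auto.
  assert (E1 : e x1 n ⊕ e y1 n = e z1 n).
  { apply (mulcan _ _ (e g n)); auto. rewrite !(mulC _ (e g n)), <- E. ring. }
  exists x1, y1, z1. split. intros ->; apply Hx; ring. split. intros ->; apply Hy; ring.
  split. intros ->; apply Hz; ring. split; auto. split.
  - apply (cop_third x1 y1 z1 n); auto.
  - split; auto. apply (cop_third y1 x1 z1 n); auto. apply cop_sym; auto. rewrite addC; auto.
Qed.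

End E.

Definition primeb (p : M) := I ⊕ I ≼ p /\ forall d, d ≼ p -> dvdb d p -> d = I \/ d = p.
Lemma primeb_iff p : primeb p <-> prime p.
Proof.
  unfold primeb, prime. split.
  - intros [H1 H2]. assert (Hp : p <> Z) by (intros ->; apply le0_eq in H1; eapply ax_succ0; eauto).
    split. apply le_S_lt; auto. intros d Hd. apply H2. apply dvd_le; auto. apply dvdb_iff; auto.
  - intros [H1 H2]. assert (Hp : p <> Z) by (intros ->; apply (lt_not_le _ _ H1), le_0).
    split. apply lt_S_le; auto. intros d _ Hd. apply H2, dvdb_iff; auto.
Qed.

Lemma rad_exists P w : P <> Z -> w <> Z -> w ∣ P -> (forall p, prime p -> p ∣ P -> p ∣ w) ->
  exists r, IsRad P r /\ r ≼ w.
Proof.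
  intros HP Hw HwP Hpw.
  set (f := Fand (Fnot (Feq (Tvar 0) Tzero)) (Fand (fdvd (Tvar 0) (Tvar 1) 2)
     (fall_le 3 (Tvar 1) (Fimp (Fand (Fle (Tadd Tone Tone) (Tvar 3)) (fall_le 5 (Tvar 3)
          (Fimp (fdvd (Tvar 5) (Tvar 3) 4) (For (Feq (Tvar 5) Tone) (Feq (Tvar 5) (Tvar 3))))))
        (Fimp (fdvd (Tvar 3) (Tvar 1) 4) (fdvd (Tvar 3) (Tvar 0) 4)))))).
  set (rho := fun _ : nat => P).
  assert (Hf : forall r, sat (upd rho 0 r) f <-> r <> Z /\ r ∣ P /\ forall p, prime p -> p ∣ P -> p ∣ r).
  { intros r. assert (E : sat (upd rho 0 r) f <-> ~ r = Z /\ (dvdb r P /\ forall p, p ≼ P -> primeb p -> dvdb p P -> dvdb p r))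
      by (unfold f, rho; cbn; reflexivity).
    rewrite E. split.
    - intros [H1 [H2 H3]]. split; auto. split. apply dvdb_iff; auto.
      intros p Hp HpP. apply dvdb_iff; auto. apply H3. apply dvd_le; auto. apply primeb_iff; auto. apply dvdb_iff; auto.
    - intros [H1 [H2 H3]]. split; auto. split. apply dvdb_iff; auto.
      intros p _ Hp HpP. apply dvdb_iff; auto. apply H3. apply primeb_iff; auto. apply dvdb_iff; auto. }
  destruct (LNP f 0 rho) as [r [Hr Hmin]].
  - unfold f. d0'.
  - exists w. apply Hf. auto.
  - apply Hf in Hr as [Hr0 [HrP Hrp]]. exists r. split.
    + split; auto. split; auto.
      intros d Hdd. apply NNPP. intros Hd1.
      assert (Hd0 : d <> Z) by (intros ->; destruct Hdd as [k Hk]; apply Hr0; rewrite Hk; ring).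
      destruct (prime_div d Hd0 Hd1) as [q' [Hq Hqd]].
      destruct Hqd as [d1 ->]. destruct Hdd as [k Hk].
      set (r' := q' ⊗ d1 ⊗ d1 ⊗ k).
      assert (Er : r = q' ⊗ r') by (rewrite Hk; unfold r'; ring).
      assert (Hr'0 : r' <> Z) by (intros E; apply Hr0; rewrite Er, E; ring).
      assert (Hle : r ≼ r').
      { apply Hmin, Hf. split; auto. split.
        - apply (dvd_trans r' r); auto. rewrite Er. apply dvd_mul_self_r.
        - intros p Hp HpP. pose proof (Hrp p Hp HpP) as H. rewrite Er in H.
          destruct (euclid _ _ _ Hp H) as [H'|H']; auto.
          destruct Hq as [_ Hq]. destruct (Hq p H') as [->| ->]. exfalso; apply (prime_ne1 _ Hp); auto.
          unfold r'. exists (d1 ⊗ d1 ⊗ k). ring. }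
      apply (lt_not_le r' r); auto. rewrite Er. replace r' with (r' ⊗ I) at 1 by ring.
      rewrite (mulC q'). apply lt_mul_l; auto. apply Hq.
    + apply Hmin, Hf. auto.
Qed.


Lemma nat_lt_pow2 (K : nat) : (K < 2 ^ K)%nat.
Proof. induction K; cbn; lia. Qed.

Lemma two_le (w : M) : w <> Z -> w <> I -> num 2 ≼ w.
Proof. intros H0 H1. pose proof (lt_S_le _ _ (one_lt_ne w H0 H1)) as H. cbn. rewrite add0l. auto. Qed.

Lemma flt_main (A : M -> Prop) (e : M -> M -> M) (HE : ExpPrime A e) (HE5 : E5' A e) (HE8 : E8 A e)
  (K p q : nat) (hp : (0 < p)%nat) (hq : (0 < q)%nat)
  (Habc : ABC_in ex K p q) (Hflt : FLT_exp ex) : FLT_e A e.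
Proof.
  intros [x [y [z [n [Hx [Hy [Hz [An [H2n E]]]]]]]]].
  assert (Hn0 : n <> Z) by (intros ->; apply (lt_not_le _ _ H2n), le_0).
  destruct (reduce_cop A e HE HE5 HE8 x y z n An Hn0 Hx Hy Hz E)
    as [x1 [y1 [z1 [Hx1 [Hy1 [Hz1 [Cxy [Cxz [Cyz E1]]]]]]]]].
  clear x y z Hx Hy Hz E.
  set (N0 := (3 * K + 3 + 3 * p)%nat).
  destruct (le_total n (num N0)) as [Hle|Hle].
  - destruct (num_le_inv n N0 Hle) as [k ->].
    apply Hflt. exists x1, y1, z1, (num k). split; auto. split; auto. split; auto. split; auto.
    rewrite !(isdef_num ex ex_isdef), <- !(e_num A e HE); auto.
  - destruct (Ale A e HE (num N0) n (Anum A e HE N0) An Hle) as [k [Ak Ek]].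
    set (a := e x1 n). set (b := e y1 n). set (c := e z1 n).
    assert (Hge : forall u, u <> Z -> pw u N0 ≼ e u n).
    { intros u Hu. rewrite <- Ek, (e4 A e HE _ _ _ (Anum A e HE N0) Ak), (e_num A e HE).
      apply le_mul_r. apply (e2 A e HE); auto. }
    assert (Ha0 : a <> Z) by (apply (e2 A e HE); auto).
    assert (Hb0 : b <> Z) by (apply (e2 A e HE); auto).
    assert (Hc0 : c <> Z) by (apply (e2 A e HE); auto).
    set (w := x1 ⊗ y1 ⊗ z1). set (P := a ⊗ b ⊗ c).
    assert (Hw0 : w <> Z).
    { unfold w. intros H. apply mul_eq0 in H as [H|H]; auto. apply mul_eq0 in H as [|]; auto. }
    assert (HP0 : P <> Z).
    { unfold P. intros H. apply mul_eq0 in H as [H|H]; auto. apply mul_eq0 in H as [|]; auto. }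
    assert (HwP : w ∣ P).
    { unfold w, P, a, b, c. destruct (e_xdvd A e HE x1 n An Hn0) as [k1 ->].
      destruct (e_xdvd A e HE y1 n An Hn0) as [k2 ->]. destruct (e_xdvd A e HE z1 n An Hn0) as [k3 ->].
      exists (k1 ⊗ k2 ⊗ k3). ring. }
    assert (Hpw : forall p0, prime p0 -> p0 ∣ P -> p0 ∣ w).
    { intros p0 Hp H. unfold P, w, a, b, c in *. destruct (euclid _ _ _ Hp H) as [H'|H'].
      - destruct (euclid _ _ _ Hp H') as [H''|H''].
        + apply dvd_mulr, dvd_mulr. apply (e_prime A e HE HE8 p0 x1 n); auto.
        + apply dvd_mulr, dvd_mull. apply (e_prime A e HE HE8 p0 y1 n); auto.
      - apply dvd_mull. apply (e_prime A e HE HE8 p0 z1 n); auto. }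
    destruct (rad_exists P w HP0 Hw0 HwP Hpw) as [r [Hr Hrw]].
    assert (Cab : cop a b) by (apply (e_cop A e HE8); auto).
    assert (Cac : cop a c) by (apply (e_cop A e HE8); auto).
    assert (Cbc : cop b c) by (apply (e_cop A e HE8); auto).
    pose proof (Habc a b c Ha0 Hb0 Cab Cac Cbc E1 r Hr) as Habc'.
    rewrite !(isdef_num ex ex_isdef) in Habc'.
    set (T := pw (num K) q ⊗ pw w (q + p)).
    assert (H1 : pw c q ≺ T).
    { eapply lt_le_trans; [exact Habc'|]. unfold T. apply le_mul2. apply le_refl. apply pw_mono; auto. }
    assert (H2 : pw (pw c q) 3 ≺ pw T 3) by (apply pw_strict; auto).
    assert (Hw2 : num 2 ≼ w).
    { apply two_le; auto. intros Hw1.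
      assert (x1 = I) by (apply dvd1; rewrite <- Hw1; unfold w; exists (y1 ⊗ z1); ring).
      assert (y1 = I) by (apply dvd1; rewrite <- Hw1; unfold w; exists (x1 ⊗ z1); ring).
      assert (z1 = I) by (apply dvd1; rewrite <- Hw1; unfold w; exists (x1 ⊗ y1); ring).
      subst x1 y1 z1. rewrite !(e_of1 A e HE) in E1; auto. apply addK0 in E1. apply one_ne0; auto. }
    assert (Hw1 : I ≼ w) by (apply ne0_ge1; auto).
    assert (H3 : pw w (N0 * q) ≼ pw (pw c q) 3).
    { rewrite <- (pw_mul c q 3). replace (q * 3)%nat with (3 * q)%nat by lia.
      rewrite (pw_mul c 3 q), (pw_mul w N0 q). apply pw_mono.
      apply (le_trans _ P).
      - unfold w, P. rewrite !pw_mulbase. apply le_mul2. apply le_mul2. all: apply Hge; auto.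
      - unfold P. cbn. rewrite mul1l. apply le_mul2; [apply le_mul2|apply le_refl].
        + unfold c. rewrite <- E1. fold a b. apply le_addr.
        + unfold c. rewrite <- E1. fold a b. apply le_addl. }
    assert (H4 : pw T 3 ≼ pw w (N0 * q)).
    { unfold T. rewrite pw_mulbase, <- !pw_mul.
      apply (le_trans _ (pw w (K * (q * 3)) ⊗ pw w ((q + p) * 3))).
      - apply le_mul2; [|apply le_refl]. rewrite (pw_mul w K (q * 3)). apply pw_mono.
        apply (le_trans _ (pw (num 2) K)).
        + rewrite pw_num. apply num_le. apply Nat.lt_le_incl, nat_lt_pow2.
        + apply pw_mono; auto.
      - rewrite <- pw_add. apply pw_mono_exp; auto. unfold N0. nia. }
    apply (lt_not_le _ _ H2). eapply le_trans; [exact H4|exact H3].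
Qed.

End Model.

Theorem theorem6p1 (T : theory) (K p q : nat) (hp : 0 < p) (hq : 0 < q) :
  (forall M : LStr, ModelOf T M -> ModelISigma1 M) ->
  (forall M : LStr, ModelOf T M ->
     forall ex : M -> M -> M, IsDefExp ex -> ABC_in ex K p q) ->
  (forall M : LStr, ModelOf T M ->
     forall ex : M -> M -> M, IsDefExp ex -> FLT_exp ex) ->
  forall M : LStr, ModelOf T M ->
  forall (A : M -> Prop) (e : M -> M -> M),
    ExpPrime A e -> E5' A e -> E8 A e -> FLT_e A e.
Proof.
  intros HT Habc Hflt M HM A e HE HE5 HE8.
  destruct (HT M HM) as [HB HI].
  apply (flt_main M HB HI A e HE HE5 HE8 K p q hp hq).
  - apply Habc; auto. apply ex_isdef.
  - apply Hflt; auto. apply ex_isdef.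
Qed.
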